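(* Let $V$ be a $\mathfrak g[t]$-module and $v\in V$ such that $(x_2\otimes t^r)v=0$ for all $r\ge0$, $(h\otimes t^p)v=0$ for all $h\in\mathfrak h$ and all $p\in\mathbb N$ ($p\ge1$), and $Y_2(r,s)v=0$ for all $r,s\in\mathbb Z_+$ with $r+s\ge N$, for some $N\in\mathbb N$. Suppose $(y_2\otimes t^{j+1})v=0$ for some $j\in\mathbb N$. Then for $k\in\mathbb Z_+$: (i) $Y_2(r,s)(y_2\otimes t^j)^kv=0$ for all $r+s\ge N-2k$; (ii) if moreover $(y_3\otimes t^{b+j})v=0$ for some $b\in\mathbb N$ and $(y_1\otimes t^r)v=0$ for all $r\ge0$, then $Y_2(r,s)(y_2\otimes t^j)^k(y_3\otimes t^b)v=0$ for all $r+s\ge N-2k-1$; (iii) if moreover $(x_1\otimes t^{a+j})v=0$ for some $a\in\mathbb N$ and $(x_3\otimes t^r)v=0$ for all $r\ge0$, then $Y_2(r,s)(y_2\otimes t^j)^k(x_1\otimes t^a)v=0$ for all $r+s\ge N-2k-1$; (iv) if moreover $(x_1\otimes t^{a+j})v=0$ and $(y_3\otimes t^{b+j})v=0$ for some $a,b\in\mathbb N$, and $(y_1\otimes t^r)v=0=(x_3\otimes t^r)v$ for all $r\ge0$, then $Y_2(r,s)(y_2\otimes t^j)^k(x_1\otimes t^a)(y_3\otimes t^b)v=0$ for all $r+s\ge N-2k-2$.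
   Context: $\mathfrak g=\mathfrak{sl}(1|2)$ is the Lie superalgebra of $3\times3$ complex supertrace-zero matrices with superbracket $[A,B]=AB-(-1)^{|A||B|}BA$; $x_1=E_{12},x_2=E_{23},x_3=E_{13},y_1=E_{21},y_2=E_{32},y_3=E_{31}$ ($x_2,y_2$ even, the others odd); $\mathfrak h=\operatorname{span}\{E_{11}+E_{22},E_{22}-E_{33}\}$; $\mathfrak g[t]=\mathfrak g\otimes\mathbb C[t]$ with $[a\otimes t^r,b\otimes t^s]=[a,b]\otimes t^{r+s}$. For $u\in U(\mathfrak g[t])$, $u^{(k)}=u^k/k!$, and $Y_2(r,s)=(x_2\otimes t)^{(s)}(y_2\otimes1)^{(r+s)}$ for $r,s\in\mathbb Z_+$. *)

(* Defs.v *)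
From HB Require Import structures.
From mathcomp Require Import all_boot all_order all_algebra.
Set Implicit Arguments. Unset Strict Implicit. Unset Printing Implicit Defensive.
Import Order.TTheory GRing.Theory Num.Theory.
Local Open Scope ring_scope.

Section SL12.
Variable F : fieldType.

(* index 0 is the even basis vector of C^{1|2}, indices 1,2 are odd *)
Definition ix (n : nat) : 'I_3 := inord n.
Definition E (a b : nat) : 'M[F]_3 := delta_mx (ix a) (ix b).

(* standard basis of sl(1|2) (indices shifted down by one) *)
Definition x1 := E 0 1.  Definition x2 := E 1 2.  Definition x3 := E 0 2.
Definition y1 := E 1 0.  Definition y2 := E 2 1.  Definition y3 := E 2 0.
Definition h1 := E 0 0 + E 1 1.
Definition h2 := E 1 1 - E 2 2.

Definition str (A : 'M[F]_3) : F := A (ix 0) (ix 0) - A (ix 1) (ix 1) - A (ix 2) (ix 2).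
Definition in_sl12 (A : 'M[F]_3) : Prop := str A = 0.

(* A is homogeneous of parity b (false = even, true = odd) *)
Definition homog (b : bool) (A : 'M[F]_3) : Prop :=
  forall i j : 'I_3, (((val i == 0%N) (+) (val j == 0%N)) != b) -> A i j = 0.

Definition sbr (pA pB : bool) (A B : 'M[F]_3) : 'M[F]_3 :=
  A * B - (-1) ^+ (pA && pB) *: (B * A).

(* A g[t]-module structure on V: rho A r is the action of A (x) t^r. *)
Definition is_gt_module (V : lmodType F) (rho : 'M[F]_3 -> nat -> V -> V) : Prop :=
  [/\ (forall A r (c : F) (u w : V), rho A r (c *: u + w) = c *: rho A r u + rho A r w),
      (forall A B r (c : F) (u : V), in_sl12 A -> in_sl12 B ->
          rho (c *: A + B) r u = c *: rho A r u + rho B r u) &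
      (forall A B pA pB r s (u : V), in_sl12 A -> in_sl12 B -> homog pA A -> homog pB B ->
          rho (sbr pA pB A B) (r + s)%N u
          = rho A r (rho B s u) - (-1) ^+ (pA && pB) *: rho B s (rho A r u))].

Definition divpow (V : lmodType F) (f : V -> V) (k : nat) (u : V) : V :=
  (k`!%:R)^-1 *: iter k f u.

Definition Y2 (V : lmodType F) (rho : 'M[F]_3 -> nat -> V -> V) (r s : nat) (u : V) : V :=
  divpow (rho x2 1%N) s (divpow (rho y2 0%N) (r + s) u).

End SL12.

(* Main.v *)
Require Import Defs.
From HB Require Import structures.
From mathcomp Require Import all_boot all_order all_algebra.
From mathcomp Require Import ring zify.
Import GRing.Theory.
Local Open Scope ring_scope.
Ltac ord3 := let m := fresh "m" in let Hm := fresh "Hm" in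
  case=> m Hm; case: m Hm => [|[|[|?]]] ? //.
Ltac mxt := apply/matrixP; ord3; ord3; rewrite /sbr /x1 /x2 /x3 /y1 /y2 /y3 /h1 /h2 /E /= ?expr0 ?expr1;
  rewrite !mxE /= ?big_ord_recr ?big_ord0 /= ?mxE;
  rewrite -!val_eqE /= /ix ?inordK //=; ring.
Ltac hmt := ord3; ord3; rewrite /x1 /x2 /x3 /y1 /y2 /y3 /h1 /h2 /E ?mxE;
  rewrite -!val_eqE /= /ix ?inordK //= => _; exact: subrr.
Ltac slt := rewrite /in_sl12 /str /x1 /x2 /x3 /y1 /y2 /y3 /h1 /h2 /E !mxE -!val_eqE /ix /= !inordK //=; ring.
Section S. Variable F : fieldType.
Lemma b_x2y2 : sbr false false (x2 F) (y2 F) = h2 F. Proof. mxt. Qed.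
Lemma b_h2y2 : sbr false false (h2 F) (y2 F) = (-2) *: y2 F. Proof. mxt. Qed.
Lemma b_y2y2 : sbr false false (y2 F) (y2 F) = 0. Proof. mxt. Qed.
Lemma b_x2y3 : sbr false true (x2 F) (y3 F) = y1 F. Proof. mxt. Qed.
Lemma b_h2y3 : sbr false true (h2 F) (y3 F) = (-1) *: y3 F. Proof. mxt. Qed.
Lemma b_y2y3 : sbr false true (y2 F) (y3 F) = 0. Proof. mxt. Qed.
Lemma b_y3y2 : sbr true false (y3 F) (y2 F) = 0. Proof. mxt. Qed.
Lemma b_x2x1 : sbr false true (x2 F) (x1 F) = (-1) *: x3 F. Proof. mxt. Qed.
Lemma b_h2x1 : sbr false true (h2 F) (x1 F) = (-1) *: x1 F. Proof. mxt. Qed.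
Lemma b_y2x1 : sbr false true (y2 F) (x1 F) = 0. Proof. mxt. Qed.
Lemma b_x1y2 : sbr true false (x1 F) (y2 F) = 0. Proof. mxt. Qed.
Lemma b_x3y3 : sbr true true (x3 F) (y3 F) = 1 *: h1 F + (-1) *: h2 F. Proof. mxt. Qed.
Lemma b_x1y3 : sbr true true (x1 F) (y3 F) = y2 F. Proof. mxt. Qed.
Lemma b_y1y2 : sbr true false (y1 F) (y2 F) = (-1) *: y3 F. Proof. mxt. Qed.
Lemma b_x3y2 : sbr true false (x3 F) (y2 F) = x1 F. Proof. mxt. Qed.
Lemma h_x1 : homog true (x1 F). Proof. hmt. Qed.
Lemma h_x3 : homog true (x3 F). Proof. hmt. Qed.
Lemma h_y1 : homog true (y1 F). Proof. hmt. Qed.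
Lemma h_y3 : homog true (y3 F). Proof. hmt. Qed.
Lemma h_x2 : homog false (x2 F). Proof. hmt. Qed.
Lemma h_y2 : homog false (y2 F). Proof. hmt. Qed.
Lemma h_h2 : homog false (h2 F). Proof. hmt. Qed.
Lemma s_x1 : in_sl12 (x1 F). Proof. slt. Qed.
Lemma s_x2 : in_sl12 (x2 F). Proof. slt. Qed.
Lemma s_x3 : in_sl12 (x3 F). Proof. slt. Qed.
Lemma s_y1 : in_sl12 (y1 F). Proof. slt. Qed.
Lemma s_y2 : in_sl12 (y2 F). Proof. slt. Qed.
Lemma s_y3 : in_sl12 (y3 F). Proof. slt. Qed.
Lemma s_h1 : in_sl12 (h1 F). Proof. slt. Qed.
Lemma s_h2 : in_sl12 (h2 F). Proof. slt. Qed.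
End S.

Section G.
Context (F : fieldType) (V : lmodType F).
Definition islin (f : V -> V) := forall (c : F) u w, f (c *: u + w) = c *: f u + f w.
Lemma lin0 (f : V -> V) : islin f -> f 0 = 0.
Proof. move=> h; have := h 1 0 0; rewrite !scale1r addr0 => E; by apply: (addrI (f 0)); rewrite addr0 -E. Qed.
Lemma linZ (f : V -> V) c u : islin f -> f (c *: u) = c *: f u.
Proof. move=> h; have := h c u 0; by rewrite addr0 lin0 // addr0. Qed.
Lemma iter0 (f : V -> V) n : islin f -> iter n f 0 = 0.
Proof. move=> h; elim: n => //= n ->; exact: lin0. Qed.
Lemma iterZ (f : V -> V) n c u : islin f -> iter n f (c *: u) = c *: iter n f u.
Proof. move=> h; elim: n => //= n ->; exact: linZ. Qed.
Lemma iter_comm (A Y : V -> V) n w : (forall w, A (Y w) = Y (A w)) -> A (iter n Y w) = iter n Y (A w).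
Proof. move=> h; elim: n => //= n <-; exact: h. Qed.
Lemma G2 (A B Y : V -> V) (c : F) n w : islin Y ->
  (forall w, A (Y w) = Y (A w) + c *: B w) -> (forall w, B (Y w) = Y (B w)) ->
  A (iter n.+1 Y w) = iter n.+1 Y (A w) + (n.+1%:R * c) *: iter n Y (B w).
Proof.
move=> hY hA hB; elim: n => [|n IH]; first by rewrite /= hA mul1r.
rewrite [iter n.+2 Y w]iterS hA IH.
have hD : forall u1 u2, Y (u1 + u2) = Y u1 + Y u2 by move=> u1 u2; have := hY 1 u1 u2; rewrite !scale1r.
rewrite hD (linZ _ _ _ hY) (iter_comm _ _ _ _ hB) -addrA -scalerDl.
rewrite -[Y (iter n.+1 Y (A w))]/(iter n.+2 Y (A w)) -[Y (iter n Y (B w))]/(iter n.+1 Y (B w)).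
by congr (_ + _ *: _); rewrite -[n.+2]addn1 natrD; ring.
Qed.
Lemma G3 (X H Yj Y : V -> V) n w0 : islin Y ->
  (forall w, X (Y w) = Y (X w) + H w) ->
  (forall w, H (Y w) = Y (H w) + (-2) *: Yj w) ->
  (forall w, Yj (Y w) = Y (Yj w)) -> X w0 = 0 -> H w0 = 0 ->
  X (iter n.+2 Y w0) = (- (n.+2 * n.+1)%:R) *: iter n Y (Yj w0).
Proof.
move=> hY hX hH hYj X0 H0.
have hHi : forall m, H (iter m.+1 Y w0) = (m.+1%:R * (-2)) *: iter m Y (Yj w0).
  by move=> m; rewrite (G2 _ _ _ _ _ _ hY hH hYj) H0 iter0 // add0r.
elim: n => [|n IH].
  rewrite [iter 2 Y w0]/= hX -[Y w0]/(iter 1 Y w0) hHi [iter 1 Y w0]/= hX X0 H0 addr0 !(lin0 _ hY) add0r.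
  by congr (_ *: _); ring.
rewrite [iter n.+3 Y w0]iterS hX IH hHi (linZ _ _ _ hY) -iterS -scalerDl; congr (_ *: _).
rewrite !natrM -[n.+3]addn1 -[n.+2]addn1 -[n.+1]addn1 !natrD; ring.
Qed.
End G.

Theorem mainTheorem4 (F : fieldType) (V : lmodType F)
    (rho : 'M[F]_3 -> nat -> V -> V) (v : V) (N j : nat) :
  [pchar F] =i pred0 ->
  is_gt_module rho ->
  (forall r : nat, rho (x2 F) r v = 0) ->
  (forall (c1 c2 : F) (p : nat), (0 < p)%N -> rho (c1 *: h1 F + c2 *: h2 F) p v = 0) ->
  (0 < N)%N ->
  (forall r s : nat, (N <= r + s)%N -> Y2 rho r s v = 0) ->
  (0 < j)%N ->
  rho (y2 F) j.+1 v = 0 ->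
  forall k : nat,
    (* (i) *)
    (forall r s : nat, (N - 2 * k <= r + s)%N ->
        Y2 rho r s (iter k (rho (y2 F) j) v) = 0)
    (* (ii) *)
 /\ (forall b : nat, (0 < b)%N -> rho (y3 F) (b + j)%N v = 0 ->
        (forall r : nat, rho (y1 F) r v = 0) ->
        forall r s : nat, (N - 2 * k - 1 <= r + s)%N ->
        Y2 rho r s (iter k (rho (y2 F) j) (rho (y3 F) b v)) = 0)
    (* (iii) *)
 /\ (forall a : nat, (0 < a)%N -> rho (x1 F) (a + j)%N v = 0 ->
        (forall r : nat, rho (x3 F) r v = 0) ->
        forall r s : nat, (N - 2 * k - 1 <= r + s)%N ->
        Y2 rho r s (iter k (rho (y2 F) j) (rho (x1 F) a v)) = 0)
    (* (iv) *)
 /\ (forall a b : nat, (0 < a)%N -> (0 < b)%N ->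
        rho (x1 F) (a + j)%N v = 0 -> rho (y3 F) (b + j)%N v = 0 ->
        (forall r : nat, rho (y1 F) r v = 0) ->
        (forall r : nat, rho (x3 F) r v = 0) ->
        forall r s : nat, (N - 2 * k - 2 <= r + s)%N ->
        Y2 rho r s (iter k (rho (y2 F) j) (rho (x1 F) a (rho (y3 F) b v))) = 0).
Proof.
move=> hc [hlin hA hbr] hx2 hh N0 hY2 j0 hyj k.
have hl : forall A r, @islin F V (rho A r) by move=> A r c u w; exact: hlin.
have s0 : in_sl12 (0 : 'M[F]_3) by rewrite /in_sl12 /str !mxE !subr0.
have rho00 : forall r u, rho 0 r u = 0.
  move=> r u; have := hA 0 0 r 1 u s0 s0; rewrite scale1r addr0 scale1r => E.
  by apply: (addrI (rho 0 r u)); rewrite addr0 -E.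
have rhoZ : forall A r c u, in_sl12 A -> rho (c *: A) r u = c *: rho A r u.
  by move=> A r c u sA; have := hA A 0 r c u sA s0; rewrite addr0 rho00 addr0.
have br : forall A B pA pB C r s u, in_sl12 A -> in_sl12 B -> homog pA A -> homog pB B ->
    sbr pA pB A B = C ->
    rho A r (rho B s u) = (-1) ^+ (pA && pB) *: rho B s (rho A r u) + rho C (r + s)%N u.
  move=> A B pA pB C r s u sA sB hA' hB' E.
  by have := hbr A B pA pB r s u sA sB hA' hB'; rewrite E => ->; rewrite addrC subrK.
have hn : forall n, (0 < n)%N -> (n%:R : F) != 0.
  by move=> n n0; rewrite ((pcharf0P F).1 hc n); case: n n0.
have canc : forall (c : F) (x : V), c != 0 -> c *: x = 0 -> x = 0.
  by move=> c x c0 /eqP; rewrite scaler_eq0 (negbTE c0) => /eqP.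
have l0 : forall A r, rho A r 0 = 0 by move=> A r; exact: (@lin0 F V _ (hl A r)).
have Hv : forall p, (0 < p)%N -> rho (h2 F) p v = 0.
  by move=> p hp; have := hh 0 1 p hp; rewrite scale0r add0r scale1r.
have prop : forall (A : 'M[F]_3) pA (c : F) m, in_sl12 A -> homog pA A ->
    sbr false pA (h2 F) A = c *: A -> c != 0 -> rho A m v = 0 ->
    forall q, (m <= q)%N -> rho A q v = 0.
  move=> A pA c m sA hA' E c0 h0 q /subnK <-; elim: (q - m)%N => [|d IH]; first by rewrite add0n.
  have := br _ _ _ _ _ 1%N (d + m)%N v (s_h2 F) sA (h_h2 F) hA' E.
  rewrite IH Hv // !l0 scaler0 add0r (rhoZ _ _ _ _ sA) => /esym /(canc _ _ c0).
  by rewrite addSn -add1n.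
have fin : forall r s x, iter (r + s) (rho (y2 F) 0) x = 0 -> Y2 rho r s x = 0.
  by move=> r s x h; rewrite /Y2 /divpow h scaler0 (@iter0 F V _ _ (hl _ _)) scaler0.
have base0 : forall n, (N <= n)%N -> iter n (rho (y2 F) 0) v = 0.
  move=> n hn0; have := hY2 n 0%N; rewrite addn0 => /(_ hn0); rewrite /Y2 /divpow /= addn0.
  rewrite invr1 scale1r; apply: canc; rewrite invr_eq0; apply: hn; exact: fact_gt0.
have y2p : forall q, (j < q)%N -> rho (y2 F) q v = 0.
  move=> q hq; apply: (prop _ _ _ _ (s_y2 F) (h_y2 F) (b_h2y2 F) _ hyj) => //.
  by rewrite oppr_eq0 (hn 2%N).
pose P (u : V) := [/\ rho (x2 F) j u = 0, (forall p, (j <= p)%N -> rho (h2 F) p u = 0)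
   & (forall q, (j < q)%N -> rho (y2 F) q u = 0)].
have cYY : forall q q' w, rho (y2 F) q (rho (y2 F) q' w) = rho (y2 F) q' (rho (y2 F) q w).
  move=> q q' w; have := br _ _ _ _ _ q q' w (s_y2 F) (s_y2 F) (h_y2 F) (h_y2 F) (b_y2y2 F).
  by rewrite /= expr0 scale1r rho00 addr0.
have PZ : forall u, P u -> P (rho (y2 F) j u).
  move=> u [hX hH hy]; split.
  - have := br _ _ _ _ _ j j u (s_x2 F) (s_y2 F) (h_x2 F) (h_y2 F) (b_x2y2 F).
    by rewrite hX /= expr0 scale1r l0 add0r => ->; apply: hH; lia.
  - move=> p hp; have := br _ _ _ _ _ p j u (s_h2 F) (s_y2 F) (h_h2 F) (h_y2 F) (b_h2y2 F).
    rewrite hH // /= expr0 scale1r l0 add0r (rhoZ _ _ _ _ (s_y2 F)) => ->; rewrite hy ?scaler0 //; lia.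
  - by move=> q hq; rewrite cYY hy // l0.
have Pit : forall u, P u -> forall k, P (iter k (rho (y2 F) j) u).
  by move=> u Pu; elim=> //= k' IH; apply: PZ.
have cX : forall w, rho (x2 F) j (rho (y2 F) 0 w) = rho (y2 F) 0 (rho (x2 F) j w) + rho (h2 F) j w.
  move=> w; have := br _ _ _ _ _ j 0%N w (s_x2 F) (s_y2 F) (h_x2 F) (h_y2 F) (b_x2y2 F).
  by rewrite /= expr0 scale1r addn0.
have cH : forall w, rho (h2 F) j (rho (y2 F) 0 w) = rho (y2 F) 0 (rho (h2 F) j w) + (-2) *: rho (y2 F) j w.
  move=> w; have := br _ _ _ _ _ j 0%N w (s_h2 F) (s_y2 F) (h_h2 F) (h_y2 F) (b_h2y2 F).
  by rewrite /= expr0 scale1r addn0 (rhoZ _ _ _ _ (s_y2 F)).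
have claim : forall M u, P u -> (forall n, (M <= n)%N -> iter n (rho (y2 F) 0) u = 0) ->
    forall k n, (M <= n + 2 * k)%N -> iter n (rho (y2 F) 0) (iter k (rho (y2 F) j) u) = 0.
  move=> M u Pu base; elim=> [|k' IH] n hnk; first by apply: base; lia.
  have [hX hH _] := Pit u Pu k'.
  have := @G3 F V _ _ _ _ n _ (hl _ _) cX cH (fun w => cYY j 0%N w) hX (hH j (leqnn j)).
  rewrite IH; last by lia.
  rewrite l0 => /esym /canc -> //.
  by rewrite oppr_eq0 hn.
have Pv : P v by split; [exact: hx2 | move=> p hp; apply: Hv; lia | exact: y2p].
split; first by move=> r s hrs; apply: fin; apply: (claim N v Pv base0 k); lia.
have II : forall b, (0 < b)%N -> rho (y3 F) (b + j)%N v = 0 -> (forall r, rho (y1 F) r v = 0) ->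
    P (rho (y3 F) b v) /\ (forall n, (N - 1 <= n)%N -> iter n (rho (y2 F) 0) (rho (y3 F) b v) = 0).
  move=> b b0 hy3 hy1.
  have y3p : forall q, (b + j <= q)%N -> rho (y3 F) q v = 0.
    apply: (prop _ _ _ _ (s_y3 F) (h_y3 F) (b_h2y3 F) _ hy3).
    by rewrite oppr_eq0 oner_eq0.
  split; first split.
  - have := br _ _ _ _ _ j b v (s_x2 F) (s_y3 F) (h_x2 F) (h_y3 F) (b_x2y3 F).
    by rewrite hx2 /= expr0 scale1r l0 add0r hy1.
  - move=> p hp; have := br _ _ _ _ _ p b v (s_h2 F) (s_y3 F) (h_h2 F) (h_y3 F) (b_h2y3 F).
    rewrite Hv /=; last lia. rewrite expr0 scale1r l0 add0r (rhoZ _ _ _ _ (s_y3 F)) => ->. rewrite y3p ?scaler0 //; lia.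
  - move=> q hq; have := br _ _ _ _ _ q b v (s_y2 F) (s_y3 F) (h_y2 F) (h_y3 F) (b_y2y3 F).
    by rewrite y2p // /= expr0 scale1r l0 rho00 addr0.
  move=> n hn1.
  have cy1 : forall w, rho (y1 F) b (rho (y2 F) 0 w) = rho (y2 F) 0 (rho (y1 F) b w) + (-1) *: rho (y3 F) b w.
    move=> w; have := br _ _ _ _ _ b 0%N w (s_y1 F) (s_y2 F) (h_y1 F) (h_y2 F) (b_y1y2 F).
    by rewrite /= expr0 scale1r addn0 (rhoZ _ _ _ _ (s_y3 F)).
  have cy3 : forall w, rho (y3 F) b (rho (y2 F) 0 w) = rho (y2 F) 0 (rho (y3 F) b w).
    move=> w; have := br _ _ _ _ _ b 0%N w (s_y3 F) (s_y2 F) (h_y3 F) (h_y2 F) (b_y3y2 F).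
    by rewrite /= expr0 scale1r rho00 addr0.
  have := @G2 F V _ _ _ _ n v (hl _ _) cy1 cy3.
  rewrite base0; last by lia.
  rewrite l0 hy1 (@iter0 F V _ _ (hl _ _)) add0r => /esym /canc -> //.
  by rewrite mulrN1 oppr_eq0 hn.
have III : forall a, (0 < a)%N -> rho (x1 F) (a + j)%N v = 0 -> (forall r, rho (x3 F) r v = 0) ->
    P (rho (x1 F) a v) /\ (forall n, (N - 1 <= n)%N -> iter n (rho (y2 F) 0) (rho (x1 F) a v) = 0).
  move=> a a0 hx1 hx3.
  have x1p : forall q, (a + j <= q)%N -> rho (x1 F) q v = 0.
    apply: (prop _ _ _ _ (s_x1 F) (h_x1 F) (b_h2x1 F) _ hx1).
    by rewrite oppr_eq0 oner_eq0.
  split; first split.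
  - have := br _ _ _ _ _ j a v (s_x2 F) (s_x1 F) (h_x2 F) (h_x1 F) (b_x2x1 F).
    by rewrite hx2 /= expr0 scale1r l0 add0r (rhoZ _ _ _ _ (s_x3 F)) // hx3 scaler0.
  - move=> p hp; have := br _ _ _ _ _ p a v (s_h2 F) (s_x1 F) (h_h2 F) (h_x1 F) (b_h2x1 F).
    rewrite Hv /=; last lia. rewrite expr0 scale1r l0 add0r (rhoZ _ _ _ _ (s_x1 F)) => ->. rewrite x1p ?scaler0 //; lia.
  - move=> q hq; have := br _ _ _ _ _ q a v (s_y2 F) (s_x1 F) (h_y2 F) (h_x1 F) (b_y2x1 F).
    by rewrite y2p // /= expr0 scale1r l0 rho00 addr0.
  move=> n hn1.
  have cx3 : forall w, rho (x3 F) a (rho (y2 F) 0 w) = rho (y2 F) 0 (rho (x3 F) a w) + 1 *: rho (x1 F) a w.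
    move=> w; have := br _ _ _ _ _ a 0%N w (s_x3 F) (s_y2 F) (h_x3 F) (h_y2 F) (b_x3y2 F).
    by rewrite /= expr0 !scale1r addn0.
  have cx1 : forall w, rho (x1 F) a (rho (y2 F) 0 w) = rho (y2 F) 0 (rho (x1 F) a w).
    move=> w; have := br _ _ _ _ _ a 0%N w (s_x1 F) (s_y2 F) (h_x1 F) (h_y2 F) (b_x1y2 F).
    by rewrite /= expr0 scale1r rho00 addr0.
  have := @G2 F V _ _ _ _ n v (hl _ _) cx3 cx1.
  rewrite base0; last by lia.
  rewrite l0 hx3 (@iter0 F V _ _ (hl _ _)) add0r => /esym /canc -> //.
  by rewrite mulr1 hn.
split.
  move=> b b0 hy3 hy1 r s hrs; have [Pu bu] := II b b0 hy3 hy1.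
  by apply: fin; apply: (claim _ _ Pu bu k); lia.
split.
  move=> a a0 hx1 hx3 r s hrs; have [Pu bu] := III a a0 hx1 hx3.
  by apply: fin; apply: (claim _ _ Pu bu k); lia.
move=> a b a0 b0 hx1 hy3 hy1 hx3 r s hrs.
have [[Xw Hw yw] bw] := II b b0 hy3 hy1.
have x1p : forall q, (a + j <= q)%N -> rho (x1 F) q v = 0.
  apply: (prop _ _ _ _ (s_x1 F) (h_x1 F) (b_h2x1 F) _ hx1).
  by rewrite oppr_eq0 oner_eq0.
have hhv : forall p, (0 < p)%N -> rho (1 *: h1 F + (-1) *: h2 F) p v = 0 by move=> p; exact: hh.
have x3w : forall q, (0 < q + b)%N -> rho (x3 F) q (rho (y3 F) b v) = 0.
  move=> q hq; have := br _ _ _ _ _ q b v (s_x3 F) (s_y3 F) (h_x3 F) (h_y3 F) (b_x3y3 F).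
  by rewrite hx3 l0 scaler0 add0r hhv.
have Pu : P (rho (x1 F) a (rho (y3 F) b v)).
  split.
  - have := br _ _ _ _ _ j a (rho (y3 F) b v) (s_x2 F) (s_x1 F) (h_x2 F) (h_x1 F) (b_x2x1 F).
    by rewrite Xw /= expr0 scale1r l0 add0r (rhoZ _ _ _ _ (s_x3 F)) // x3w ?scaler0 //; lia.
  - move=> p hp; have := br _ _ _ _ _ p a (rho (y3 F) b v) (s_h2 F) (s_x1 F) (h_h2 F) (h_x1 F) (b_h2x1 F).
    rewrite Hw // /= expr0 scale1r l0 add0r (rhoZ _ _ _ _ (s_x1 F)) // => ->.
    have := br _ _ _ _ _ (p + a)%N b v (s_x1 F) (s_y3 F) (h_x1 F) (h_y3 F) (b_x1y3 F).
    rewrite x1p; last lia. rewrite l0 scaler0 add0r y2p; last lia. by move=> ->; rewrite scaler0.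
  - move=> q hq; have := br _ _ _ _ _ q a (rho (y3 F) b v) (s_y2 F) (s_x1 F) (h_y2 F) (h_x1 F) (b_y2x1 F).
    by rewrite yw // /= expr0 scale1r l0 rho00 addr0.
have bu : forall n, (N - 2 <= n)%N -> iter n (rho (y2 F) 0) (rho (x1 F) a (rho (y3 F) b v)) = 0.
  move=> n hn2.
  have cx3 : forall w, rho (x3 F) a (rho (y2 F) 0 w) = rho (y2 F) 0 (rho (x3 F) a w) + 1 *: rho (x1 F) a w.
    move=> w; have := br _ _ _ _ _ a 0%N w (s_x3 F) (s_y2 F) (h_x3 F) (h_y2 F) (b_x3y2 F).
    by rewrite /= expr0 !scale1r addn0.
  have cx1 : forall w, rho (x1 F) a (rho (y2 F) 0 w) = rho (y2 F) 0 (rho (x1 F) a w).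
    move=> w; have := br _ _ _ _ _ a 0%N w (s_x1 F) (s_y2 F) (h_x1 F) (h_y2 F) (b_x1y2 F).
    by rewrite /= expr0 scale1r rho00 addr0.
  have := @G2 F V _ _ _ _ n (rho (y3 F) b v) (hl _ _) cx3 cx1.
  rewrite bw; last by lia.
  rewrite l0 x3w; last by lia.
  rewrite (@iter0 F V _ _ (hl _ _)) add0r => /esym /canc -> //.
  by rewrite mulr1 hn.
by apply: fin; apply: (claim _ _ Pu bu k); lia.
Qed.
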